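(* Let $\hat Q^\pi=\sum_{i=1}^n b^\pi_iK(\cdot,\omega_0^{(i)})$ with $\mathbf b^\pi=[\mathbf K+\lambda n\mathrm I-\gamma\mathbf C]^{-1}\mathbf r$ be the kernel TD estimator, let $\mathcal D^\pi=\hat Q^\pi-Q^\pi$, and let $\varepsilon_i=r(\omega_0^{(i)})+\gamma Q^\pi(\omega_1^{(i)})-Q^\pi(\omega_0^{(i)})$ be the Bellman residuals. Then $$\frac1n\sum_{i=1}^n\Big(\mathcal D^\pi(\omega_0^{(i)})^2-\gamma\,\mathcal D^\pi(\omega_0^{(i)})\mathcal D^\pi(\omega_1^{(i)})\Big)=\frac1n\sum_{i=1}^n\varepsilon_i\,\mathcal D^\pi(\omega_0^{(i)})-\lambda\langle\mathcal D^\pi,\hat Q^\pi\rangle_{\mathcal H}.$$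
   Context: Markov decision process $(\mathcal S,\mathcal A,P,r,\gamma)$ with compact convex $\mathcal S\subset\mathbb R^{d_s}$, $\mathcal A\subset\mathbb R^{d_a}$, transition density $P(\cdot\mid s,a)$, reward $r$, discount $\gamma\in[0,1]$; $\pi$ a fixed policy; $Q^\pi(s,a)=\mathbb E[\sum_{t\ge0}\gamma^tr(s_t,a_t)\mid s_0=s,a_0=a]$ along $a_t\sim\pi(\cdot\mid s_t)$, $s_{t+1}\sim P(\cdot\mid s_t,a_t)$; it satisfies $Q^\pi(s,a)=r(s,a)+\gamma\mathbb E_{s'\sim P(\cdot\mid s,a),a'\sim\pi(\cdot\mid s')}Q^\pi(s',a')$. $K$ is a symmetric positive definite kernel on $\mathcal S\times\mathcal A$ with $\max_\omega K(\omega,\omega)<\infty$, $\mathcal H$ its RKHS; standing assumption: $Q^\pi\in\mathcal H$ and $r\in\mathcal H$. $\lambda>0$. Data: i.i.d. for $i=1,\dots,n$: $s_0^{(i)}\sim\mu_0$, $a_0^{(i)}\sim\pi(\cdot\mid s_0^{(i)})$, $s_1^{(i)}\sim P(\cdot\mid s_0^{(i)},a_0^{(i)})$, $a_1^{(i)}\sim\pi(\cdot\mid s_1^{(i)})$; $\omega_j^{(i)}=(s_j^{(i)},a_j^{(i)})$. Matrices: $\mathbf K_{i,j}=K(\omega_0^{(i)},\omega_0^{(j)})$, $\mathbf C_{i,j}=K(\omega_1^{(i)},\omega_0^{(j)})$, $\mathbf r_i=r(\omega_0^{(i)})$ (with $\mathbf K+\lambda n\mathrm I-\gamma\mathbf C$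 invertible). *)

(* Defs.v *)
From HB Require Import structures.
From mathcomp Require Import all_boot all_order all_algebra.
From mathcomp Require Import reals.
Set Implicit Arguments. Unset Strict Implicit. Unset Printing Implicit Defensive.
Import Order.TTheory GRing.Theory Num.Theory.
Local Open Scope ring_scope.

Definition spd_kernel (R : realType) (Omega : Type) (K : Omega -> Omega -> R) : Prop :=
  [/\ (forall x y, K x y = K y x),
      (forall (m : nat) (c : 'I_m -> R) (x : 'I_m -> Omega),
          0 <= \sum_(i < m) \sum_(j < m) c i * c j * K (x i) (x j))
    & exists M : R, forall x, K x x <= M].

(* (H, ip, ev, ksec) is the reproducing kernel Hilbert space of K on Omega:
   H is a real vector space, [ip] an inner product on it, H is complete for the
   induced norm, [ev f] is the function on Omega represented by f (a linear,
   injective map, so H is a space of functions), [ksec w] is the kernel section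
   K(., w), and the reproducing property <f, K(., w)> = f(w) holds. *)
Record is_rkhs (R : realType) (Omega : Type) (K : Omega -> Omega -> R)
  (H : lmodType R) (ip : H -> H -> R) (ev : H -> Omega -> R) (ksec : Omega -> H)
  : Prop := {
  ip_linear : forall (a : R) (f g h : H), ip (a *: f + g) h = a * ip f h + ip g h;
  ip_sym : forall f g, ip f g = ip g f;
  ip_ge0 : forall f, 0 <= ip f f;
  ip_eq0 : forall f, ip f f = 0 -> f = 0;
  ip_complete : forall u : nat -> H,
      (forall e : R, 0 < e -> exists N, forall p q, (N <= p)%N -> (N <= q)%N ->
           ip (u p - u q) (u p - u q) < e) ->
      exists f : H, forall e : R, 0 < e -> exists N, forall p, (N <= p)%N ->
           ip (u p - f) (u p - f) < e;
  ev_linear : forall (a : R) (f g : H) w, ev (a *: f + g) w = a * ev f w + ev g w;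
  ev_inj : forall f g, (forall w, ev f w = ev g w) -> f = g;
  ksec_ev : forall w w', ev (ksec w) w' = K w' w;
  reproducing : forall f w, ip f (ksec w) = ev f w }.

Definition gramK (R : realType) (Omega : Type) (K : Omega -> Omega -> R)
  (n : nat) (w0 : 'I_n -> Omega) : 'M[R]_n :=
  \matrix_(i, j) K (w0 i) (w0 j).

Definition crossC (R : realType) (Omega : Type) (K : Omega -> Omega -> R)
  (n : nat) (w0 w1 : 'I_n -> Omega) : 'M[R]_n :=
  \matrix_(i, j) K (w1 i) (w0 j).

Definition td_coef (R : realType) (Omega : Type) (K : Omega -> Omega -> R)
  (r : Omega -> R) (gamma lambda : R) (n : nat) (w0 w1 : 'I_n -> Omega) : 'cV[R]_n :=
  invmx (gramK K w0 + (lambda * n%:R)%:M - gamma *: crossC K w0 w1)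
  *m \col_i r (w0 i).

Definition td_estimator (R : realType) (Omega : Type) (K : Omega -> Omega -> R)
  (H : lmodType R) (ksec : Omega -> H)
  (r : Omega -> R) (gamma lambda : R) (n : nat) (w0 w1 : 'I_n -> Omega) : H :=
  \sum_(i < n) (td_coef K r gamma lambda w0 w1 i 0) *: ksec (w0 i).

(* Main.v *)
Require Import Defs.
From HB Require Import structures.
From mathcomp Require Import all_boot all_order all_algebra.
From mathcomp Require Import reals.
From mathcomp Require Import ring.
Import Order.TTheory GRing.Theory Num.Theory.
Local Open Scope ring_scope.

Section Lin.
Context {R : realType} {H : lmodType R} {f : H -> R}.
Hypothesis hf : forall (a : R) (x y : H), f (a *: x + y) = a * f x + f y.

Lemma lf0 : f 0 = 0.
Proof.
have e := hf 1 0 0; rewrite scaler0 addr0 mul1r in e.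
by apply: (@addrI _ (f 0)); rewrite addr0 -e.
Qed.
Lemma lfD x y : f (x + y) = f x + f y.
Proof. by have := hf 1 x y; rewrite scale1r mul1r. Qed.
Lemma lfZ a x : f (a *: x) = a * f x.
Proof. by have := hf a x 0; rewrite addr0 lf0 addr0. Qed.
Lemma lfB x y : f (x - y) = f x - f y.
Proof. by rewrite lfD -scaleN1r lfZ mulN1r. Qed.
Lemma lfsum n (F : 'I_n -> H) : f (\sum_(i < n) F i) = \sum_(i < n) f (F i).
Proof.
elim/big_rec2: _; first by rewrite lf0.
by move=> i y1 y2 _ <-; rewrite lfD.
Qed.
End Lin.

Theorem proposition2 (R : realType) (Omega : Type) (K : Omega -> Omega -> R)
  (H : lmodType R) (ip : H -> H -> R) (ev : H -> Omega -> R) (ksec : Omega -> H)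
  (r : Omega -> R) (Q : H) (gamma lambda : R) (n : nat)
  (w0 w1 : 'I_n -> Omega) :
  spd_kernel K ->
  is_rkhs K ip ev ksec ->
  (exists rH : H, forall w, ev rH w = r w) ->
  0 <= gamma <= 1 ->
  0 < lambda ->
  (0 < n)%N ->
  gramK K w0 + (lambda * n%:R)%:M - gamma *: crossC K w0 w1 \in unitmx ->
  let Qhat := td_estimator K ksec r gamma lambda w0 w1 in
  let D := Qhat - Q in
  let eps := fun i : 'I_n => r (w0 i) + gamma * ev Q (w1 i) - ev Q (w0 i) in
  (n%:R)^-1 * \sum_(i < n) (ev D (w0 i) ^+ 2 - gamma * ev D (w0 i) * ev D (w1 i))
  = (n%:R)^-1 * \sum_(i < n) eps i * ev D (w0 i) - lambda * ip D Qhat.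
Proof.
move=> _ hR _ _ _ n0 hU Qhat D eps.
set A := (X in X \in unitmx) in hU.
set b := td_coef K r gamma lambda w0 w1.
have hA : A *m b = \col_i r (w0 i) by rewrite /b /td_coef mulKVmx.
have evl w : forall a x y, ev (a *: x + y) w = a * ev x w + ev y w.
  by move=> a x y; apply: (ev_linear hR).
have ipl h : forall a x y, ip (a *: x + y) h = a * ip x h + ip y h.
  by move=> a x y; apply: (ip_linear hR).
have evQ w : ev Qhat w = \sum_(j < n) b j 0 * K w (w0 j).
  rewrite /Qhat /td_estimator (lfsum (evl w)); apply: eq_bigr => j _.
  by rewrite (lfZ (evl w)) (ksec_ev hR).
have row i : ev Qhat (w0 i) + lambda * n%:R * b i 0 - gamma * ev Qhat (w1 i)
             = r (w0 i).
  have := congr1 (fun M : 'cV[R]_n => M i 0) hA.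
  rewrite /A mulmxBl mulmxDl mul_scalar_mx -scalemxAl !mxE => <-.
  rewrite !evQ; congr (_ + _ - _).
    by apply: eq_bigr => j _; rewrite !mxE mulrC.
  congr (_ * _).
  by apply: eq_bigr => j _; rewrite !mxE mulrC.
have evD w : ev D w = ev Qhat w - ev Q w by rewrite /D (lfB (evl w)).
have ipD : ip D Qhat = \sum_(i < n) b i 0 * ev D (w0 i).
  rewrite (ip_sym hR) /Qhat /td_estimator (lfsum (ipl D)).
  apply: eq_bigr => i _; rewrite (lfZ (ipl D)) (ip_sym hR).
  by rewrite (reproducing hR).
have key i : ev D (w0 i) ^+ 2 - gamma * ev D (w0 i) * ev D (w1 i)
   = eps i * ev D (w0 i) - lambda * n%:R * (b i 0 * ev D (w0 i)).
  rewrite /eps -(row i) !evD; ring.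
rewrite (eq_bigr _ (fun i _ => key i)) sumrB -mulr_sumr ipD mulrBr.
congr (_ - _); rewrite mulrA mulrCA mulVf ?mulr1 //.
by rewrite pnatr_eq0 -lt0n.
Qed.
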